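(* For integers $k\ge 2$, $N\ge 2$, $$\det(\widetilde H)=\frac{N^{\binom{k}{2}}}{k!}\prod_{i=1}^{k-1}(iN+1).$$
   Context: $H[c,c'] = \#\{(d_1,\ldots,d_k)\in\{0,\ldots,N-1\}^k : \lfloor (d_1+\cdots+d_k+c)/N\rfloor = c'\}$ for $c,c'\in\{0,\ldots,k-1\}$; $\widetilde H$ is the leading $(k-1)\times(k-1)$ principal submatrix of $H$ (indices $0,\ldots,k-2$). *)

(* Defs.v *)
From mathcomp Require Import all_boot all_order all_algebra.
Set Implicit Arguments. Unset Strict Implicit. Unset Printing Implicit Defensive.
Import GRing.Theory Num.Theory.
Local Open Scope ring_scope.

Definition Hentry (k N c c' : nat) : nat :=
  #|[set d : {ffun 'I_k -> 'I_N} | ((\sum_(i < k) (d i : nat) + c) %/ N)%N == c']|.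

(* The leading (k-1)x(k-1) principal submatrix of H (indices 0..k-2), over rat. *)
Definition Htilde (k N : nat) : 'M[rat]_(k.-1) :=
  \matrix_(c < k.-1, c' < k.-1) (Hentry k N c c')%:R.

(* Main.v *)
Require Import Defs.
From mathcomp Require Import all_boot all_order all_algebra ring lra zify.
Import GRing.Theory Num.Theory.
Local Open Scope ring_scope.

Definition Pr (k : nat) (x : int) : rat := (\prod_(r < k) (x%:~R + r%:R)) / (k`!)%:R.
Definition pp k (x : int) : rat := if (0 < x)%R then Pr k x else 0.
Lemma PrS k x : Pr k.+1 x - Pr k.+1 (x - 1) = Pr k x.
Proof.
rewrite /Pr big_ord_recr big_ord_recl /=.
have -> : \prod_(i < k) ((x - 1)%:~R + (bump 0 i)%:R) = \prod_(i < k) (x%:~R + i%:R) :> rat.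
  apply: eq_bigr => i _; rewrite /bump /= add1n rmorphB /= -natr1; ring.
rewrite rmorphB /= factS natrM.
set P := \prod_(i < k) _.
have h1 : (k`!)%:R != 0 :> rat by rewrite pnatr_eq0 -lt0n fact_gt0.
have h2 : (k.+1)%:R != 0 :> rat by rewrite pnatr_eq0.
rewrite addr0 -natr1. field. by rewrite natr1 h2 h1.
Qed.
Lemma Pr0 x : Pr 0 x = 1.
Proof. by rewrite /Pr big_ord0 fact0 divr1. Qed.

Lemma Pr_zero k x : (0 < x + k%:Z)%R -> (x <= 0)%R -> Pr k x = 0.
Proof.
move=> h1 h2.
have hk : (`|x| < k)%N by lia.
rewrite /Pr (bigD1 (Ordinal hk)) //= .
have -> : x%:~R + (`|x|%N)%:R = 0 :> rat.
  have -> : (`|x|%N)%:R = ((- x)%:~R : rat).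
    have -> : (- x) = (`|x|%N)%:Z by lia.
    by [].
  by rewrite rmorphN /= subrr.
by rewrite !mul0r.
Qed.

Lemma ppS k x : pp k.+1 x - pp k.+1 (x - 1) = pp k x.
Proof.
rewrite /pp; case: (ltrP 0 x) => hx.
  case: (ltrP 0 (x - 1)) => hx1; first by rewrite PrS.
  have -> : x = 1 by lia.
  rewrite subr0 -(PrS k 1) (@Pr_zero k.+1 (1 - 1)) ?subr0 //; lia.
case: (ltrP 0 (x - 1)) => hx1; first by lia.
by rewrite subr0.
Qed.

Lemma pp_tel k x M : \sum_(e < M) pp k (x - e%:Z) = pp k.+1 x - pp k.+1 (x - M%:Z).
Proof.
elim: M => [|M IH]; first by rewrite big_ord0 subr0 subrr.
rewrite big_ord_recr /= IH -(ppS k (x - M%:Z)).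
have -> : x - M%:Z - 1 = x - M.+1%:Z by lia.
ring.
Qed.
Definition fcons (T : finType) k (e : T) (d : {ffun 'I_k -> T}) : {ffun 'I_k.+1 -> T} :=
  [ffun i => if unlift ord0 i is Some j then d j else e].
Arguments fcons {T k}.
Lemma sum_ffunS (T : finType) k (F : {ffun 'I_k.+1 -> T} -> nat) :
 (\sum_d F d = \sum_(e : T) \sum_(d : {ffun 'I_k -> T}) F (fcons e d))%N.
Proof.
rewrite pair_big /=.
rewrite (reindex (fun p : T * {ffun 'I_k -> T} => fcons p.1 p.2)) //=.
exists (fun d : {ffun 'I_k.+1 -> T} => (d ord0, [ffun j => d (lift ord0 j)])) => [[e d] _ | d _] /=.
  congr (_, _); first by rewrite /fcons ffunE unlift_none.
  by apply/ffunP => j; rewrite !ffunE liftK.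
apply/ffunP => i; rewrite /fcons !ffunE.
by case: (unliftP ord0 i) => [j ->|->]; rewrite ?ffunE.
Qed.

Lemma cardP (T : finType) (P : pred T) : #|[set d | P d]| = (\sum_d (P d : nat))%N.
Proof. by rewrite -sum1_card big_mkcond /=; apply: eq_bigr => d _; rewrite inE; case: (P d). Qed.

Definition g k N a b := #|[set d : {ffun 'I_k -> 'I_N} | (\sum_(i < k) (d i : nat) + a < b)%N]|.

Lemma g_rec k N a b : g k.+1 N a b = (\sum_(e < N) g k N (a + e) b)%N.
Proof.
rewrite /g cardP sum_ffunS; apply: eq_bigr => e _; rewrite cardP.
apply: eq_bigr => d _; rewrite big_ord_recl /fcons !ffunE unlift_none.
congr (nat_of_bool _).
under eq_bigr => i _ do rewrite ffunE liftK.
by rewrite [(e + _)%N]addnC -addnA [(e + a)%N]addnC.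
Qed.

Lemma g0 N a b : g 0 N a b = (a < b)%N.
Proof.
rewrite /g cardP; under eq_bigr => d _ do rewrite big_ord0 add0n.
by rewrite sum_nat_const card_ffun !card_ord expn0 mul1n.
Qed.
Lemma pascal_sum (F : nat -> rat) k :
  \sum_(0 <= j < k.+1) (-1)^+j * ('C(k,j))%:R * (F j - F j.+1) =
  \sum_(0 <= j < k.+2) (-1)^+j * ('C(k.+1,j))%:R * F j.
Proof.
under eq_bigr => j _ do rewrite mulrBr.
rewrite sumrB.
rewrite big_nat_recl // [in RHS]big_nat_recl //.
under [in RHS]eq_bigr => j _ do rewrite binS natrD mulrDr mulrDl.
rewrite big_split /= !bin0 !expr0 !mul1r.
set T := \sum_(0 <= i < k.+1) _ * 'C(k, i.+1)%:R * _.
have -> : T = \sum_(0 <= i < k) (-1) ^+ i.+1 * 'C(k, i.+1)%:R * F i.+1.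
  by rewrite /T big_nat_recr //= bin_small // mulr0 mul0r addr0.
set S := \sum_(0 <= i < k) _.
have -> : \sum_(0 <= i < k.+1) (-1) ^+ i.+1 * 'C(k, i)%:R * F i.+1 =
   - \sum_(0 <= i < k.+1) (-1) ^+ i * 'C(k, i)%:R * F i.+1.
  by rewrite -sumrN; apply: eq_bigr => i _; rewrite exprS; ring.
ring.
Qed.

Lemma gform k N a b : ((g k N a b)%:R : rat) =
  \sum_(0 <= j < k.+1) (-1)^+j * ('C(k,j))%:R * pp k (b%:Z - a%:Z - (j * N)%:Z).
Proof.
elim: k a => [|k IH] a.
  rewrite g0 big_nat1 /pp expr0 bin0 mul1r mul0n subr0 Pr0.
  case: (ltnP a b) => h.
    by rewrite ifT //; lia.
  by rewrite ifF //; lia.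
rewrite g_rec natr_sum.
under eq_bigr => e _ do rewrite IH.
rewrite exchange_big /=.
rewrite -pascal_sum.
apply: eq_bigr => j _.
rewrite -mulr_sumr; congr (_ * _).
have -> : (b%:Z - a%:Z - (j.+1 * N)%:Z) = b%:Z - a%:Z - (j * N)%:Z - N%:Z by lia.
rewrite -(pp_tel k (b%:Z - a%:Z - (j * N)%:Z) N).
apply: eq_bigr => e _; congr (pp _ _); lia.
Qed.

Lemma Hentry_g k N i j : (0 < N)%N ->
  ((g k N i (j.+1 * N))%:R : rat) = (g k N i (j * N))%:R + (Hentry k N i j)%:R.
Proof.
move=> hN; rewrite -natrD; congr (_%:R); rewrite /g /Hentry !cardP -big_split.
apply: eq_bigr => d _ /=.
set x := (\sum_(i0 < k) _ + i)%N.
have -> : ((x %/ N)%N == j) = (j <= x %/ N)%N && ((x %/ N)%N < j.+1)%N by rewrite eqn_leq ltnS andbC.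
rewrite ltn_divLR // leq_divRL //.
case: (ltnP x (j.+1 * N)); case: (ltnP x (j * N)) => /=; lia.
Qed.

Lemma g_zero k N i : g k N i 0 = 0%N.
Proof. by rewrite /g cardP big1. Qed.

Lemma sumH k N i t : (0 < N)%N ->
  \sum_(j < t.+1) ((Hentry k N i j)%:R : rat) = (g k N i (t.+1 * N))%:R.
Proof.
move=> hN.
have := telescope_sumr (fun j => ((g k N i (j * N))%:R : rat)) (leq0n t.+1).
rewrite mul0n g_zero subr0 => <-.
rewrite big_mkord; apply: eq_bigr => j _; rewrite Hentry_g //; ring.
Qed.

Lemma pp_Pr k x : (0 < x + k%:Z)%R -> pp k x = Pr k x.
Proof.
rewrite /pp => h; case: (ltrP 0 x) => // hx.
by rewrite Pr_zero.
Qed.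

Lemma gQ n N i t : (i < n)%N -> (t < n)%N ->
 ((g n.+1 N i (t.+1 * N))%:R : rat) = \sum_(0 <= l < t.+1)
   Pr n.+1 ((l.+1 * N)%:Z - i%:Z) * ((-1)^+(t - l) * ('C(n.+1, t - l))%:R).
Proof.
move=> hi ht.
rewrite gform (big_cat_nat _ (n := t.+1)) //=; last by lia.
rewrite [X in _ + X]big_nat_cond [X in _ + X]big1 ?addr0; last first.
  move=> j /andP[/andP[hj1 hj2] _].
  have hm : (t.+1 * N <= j * N)%N by rewrite leq_mul2r hj1 orbT.
  rewrite /pp ifF ?mulr0 //; lia.
rewrite big_nat_rev /= add0n.
apply: eq_big_nat => l /andP[_ hl].
rewrite subSS.
have he : (((t - l) * N)%N + (l.+1 * N)%N = t.+1 * N)%N by rewrite -mulnDl; congr (_ * _)%N; lia.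
rewrite pp_Pr; last by lia.
have -> : (t.+1 * N)%:Z - i%:Z - ((t - l) * N)%:Z = (l.+1 * N)%:Z - i%:Z by lia.
ring.
Qed.

Lemma det_uni n (A : 'M[rat]_n) : (forall i j : 'I_n, (j < i)%N -> A i j = 0) ->
  (forall i, A i i = 1) -> \det A = 1.
Proof.
move=> h0 h1; rewrite -det_tr det_trig.
  by rewrite big1 // => i _; rewrite mxE h1.
by apply/is_trig_mxP => i j hij; rewrite mxE h0.
Qed.

Definition T1 n : 'M[rat]_n := \matrix_(j, t) ((j <= t)%N)%:R.
Definition Qmx n N : 'M[rat]_n := \matrix_(i, l) Pr n.+1 ((l.+1 * N)%:Z - i%:Z).
Definition Umx n : 'M[rat]_n :=
  \matrix_(l, t) (if (l <= t)%N then (-1)^+(t - l) * ('C(n.+1, t - l))%:R else 0).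

Lemma detT1 n : \det (T1 n) = 1.
Proof.
apply: det_uni => [i j hij|i]; rewrite mxE ?leqnn //.
by rewrite leqNgt hij.
Qed.

Lemma detU n : \det (Umx n) = 1.
Proof.
apply: det_uni => [i j hij|i]; rewrite mxE ?leqnn ?subnn ?bin0 ?mulr1 //.
by rewrite leqNgt hij.
Qed.

Lemma HTQU n N : (0 < N)%N -> Htilde n.+1 N *m T1 n = Qmx n N *m Umx n.
Proof.
move=> hN; apply/matrixP => i t; rewrite !mxE.
have ht : (t.+1 <= n)%N by [].
transitivity (\sum_(j < t.+1) ((Hentry n.+1 N i j)%:R : rat)).
  rewrite (big_ord_widen n (fun j => ((Hentry n.+1 N i j)%:R : rat)) ht).
  rewrite [RHS]big_mkcond /=; apply: eq_bigr => j _; rewrite !mxE ltnS; case: (j <= t)%N; rewrite ?mulr1 ?mulr0 //.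
rewrite sumH // gQ //.
rewrite big_mkord (big_ord_widen n (fun l => Pr n.+1 ((l.+1 * N)%:Z - i%:Z) * ((-1)^+(t - l) * ('C(n.+1, t - l))%:R)) ht) big_mkcond.
by apply: eq_bigr => j _; rewrite !mxE ltnS; case: (j <= t)%N; rewrite ?mulr0.
Qed.

Lemma det_H_Q n N : (0 < N)%N -> \det (Htilde n.+1 N) = \det (Qmx n N).
Proof.
move=> hN.
have := congr1 determinant (HTQU n N hN).
by rewrite !det_mulmx detT1 detU !mulr1.
Qed.
Definition Rp n (i : nat) : {poly rat} :=
  \prod_(r < n.+1 | (r != i :> nat) && (r != i.+1 :> nat)) ('X - (i%:R - r%:R)%:P).

Lemma Rp_eval n i x : (Rp n i).[x] =
  \prod_(r < n.+1 | (r != i :> nat) && (r != i.+1 :> nat)) (x - i%:R + r%:R).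
Proof.
rewrite /Rp horner_prod; apply: eq_bigr => r _; rewrite hornerXsubC; ring.
Qed.

Lemma Q_factor n i (x : int) : (i < n)%N ->
  Pr n.+1 (x - i%:Z) = x%:~R * (x%:~R + 1) / (n.+1)`!%:R * (Rp n i).[x%:~R].
Proof.
move=> hi.
have h1 : (i < n.+1)%N by lia.
have h2 : (i.+1 < n.+1)%N by lia.
rewrite /Pr (bigD1 (Ordinal h1)) //= (bigD1 (Ordinal h2)) /=; last first.
  by rewrite -(inj_eq val_inj) /=; lia.
rewrite (Rp_eval n i).
have -> : \prod_(j < n.+1 | (j != Ordinal h1) && (j != Ordinal h2)) ((x - i%:Z)%:~R + j%:R)
   = \prod_(r < n.+1 | (r != i :> nat) && (r != i.+1 :> nat)) (x%:~R - i%:R + r%:R) :> rat.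
  apply: eq_big => [r|r _]; first by rewrite /= -!(inj_eq val_inj).
  by rewrite rmorphB.
rewrite rmorphB /= -natr1; field.
by rewrite pnatr_eq0 -lt0n fact_gt0.
Qed.

Lemma size_Rp n i : (i < n)%N -> (size (Rp n i) <= n)%N.
Proof.
move=> hi; rewrite /Rp size_prod => [|r _]; last by rewrite polyXsubC_eq0.
under eq_bigr => r _ do rewrite size_XsubC.
rewrite sum_nat_const.
set c := #|_|.
have hc : (c + 2 = n.+1)%N.
  have h1 : (i < n.+1)%N by lia.
  have h2 : (i.+1 < n.+1)%N by lia.
  have := cardC (pred2 (Ordinal h1) (Ordinal h2)).
  rewrite card2 card_ord.
  have -> : (Ordinal h1 != Ordinal h2) = true by rewrite -(inj_eq val_inj) /=; lia.
  have -> : #|[predC pred2 (Ordinal h1) (Ordinal h2)]| = c.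
    apply: eq_card => r; rewrite !inE /= -!(inj_eq val_inj) /=.
    by rewrite negb_or.
  simpl; lia.
have -> : (2%R : nat) = 2%N by [].
lia.
Qed.


Lemma Pr1 k : Pr k 1 = 1.
Proof.
rewrite /Pr fact_prod big_add1 /= big_mkord natr_prod.
have -> : \prod_(r < k) (1%:~R + r%:R) = \prod_(i < k) (i.+1)%:R :> rat.
  by apply: eq_bigr => r _; rewrite -natr1 addrC.
by rewrite divff //; apply/prodf_neq0 => i _; rewrite pnatr_eq0.
Qed.

Definition Amx n : 'M[rat]_n := \matrix_(i, j) (Rp n i)`_j.
Definition Vm n (a : nat -> rat) : 'M[rat]_n := \matrix_(j, t) (a t)^+j.

Lemma RV n (a : nat -> rat) :
  (\matrix_(i < n, t < n) (Rp n i).[a t]) = Amx n *m Vm n a.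
Proof.
apply/matrixP => i t; rewrite !mxE (horner_coef_wide _ (size_Rp n i (ltn_ord i))).
by apply: eq_bigr => j _; rewrite !mxE.
Qed.

Lemma Vm_scale n (c : rat) (a : nat -> rat) :
  Vm n (fun t => c * a t) = diag_mx (\row_(j < n) c ^+ j) *m Vm n a.
Proof.
by apply/matrixP => j t; rewrite mul_diag_mx !mxE exprMn.
Qed.

Lemma det_diag_pow n (c : rat) : \det (diag_mx (\row_(j < n) c ^+ j)) = c ^+ 'C(n, 2).
Proof.
rewrite det_diag.
under eq_bigr => j _ do rewrite mxE.
by rewrite prodrXr -bin2_sum big_mkord.
Qed.

Lemma Rp_zero n i t : (t < i)%N -> (i < n)%N -> (Rp n i).[(t.+1)%:R] = 0.
Proof.
move=> hti hi.
have h0 : (i - t.+1 < n.+1)%N by lia.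
rewrite Rp_eval (bigD1 (Ordinal h0)) /=; last by apply/andP; split; lia.
rewrite natrB //.
have -> : t.+1%:R - i%:R + (i%:R - t.+1%:R) = 0 :> rat by ring.
by rewrite mul0r.
Qed.

Lemma Rp_diag n i : (i < n)%N ->
  (i.+1)%:R * (i.+2)%:R * (Rp n i).[(i.+1)%:R] = (n.+1)`!%:R :> rat.
Proof.
move=> hi.
have := Q_factor n i (i.+1)%:Z hi.
have -> : (i.+1)%:Z - i%:Z = 1 by lia.
rewrite Pr1 => h.
have hf : (n.+1)`!%:R != 0 :> rat by rewrite pnatr_eq0 -lt0n fact_gt0.
have e : ((i.+1)%:Z)%:~R = (i.+1)%:R :> rat by [].
rewrite e in h.
have e2 : (i.+2)%:R = (i.+1)%:R + 1 :> rat by rewrite -natr1.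
rewrite e2. set I1 := (i.+1)%:R in h *. set F := (n.+1)`!%:R in h hf *. set R := (Rp n i).[I1] in h *.
transitivity (F * (I1 * (I1 + 1) / F * R)); last by rewrite -h mulr1.
field; exact: hf.
Qed.

Lemma det_Ry n : \det (\matrix_(i < n, t < n) (Rp n i).[(t.+1)%:R]) =
  \prod_(i < n) (Rp n i).[(i.+1)%:R].
Proof.
rewrite -det_tr det_trig.
  by apply: eq_bigr => i _; rewrite !mxE.
by apply/is_trig_mxP => i j hij; rewrite !mxE Rp_zero.
Qed.

Lemma det_Q n N : \det (Qmx n N) = (N%:R)^+'C(n,2) *
  \prod_(i < n) ((Rp n i).[(i.+1)%:R] *
     ((i.+1 * N)%:R * ((i.+1 * N)%:R + 1) / (n.+1)`!%:R)).
Proof.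
pose w := \row_(t < n) ((t.+1 * N)%:R * ((t.+1 * N)%:R + 1) / (n.+1)`!%:R : rat).
have hQ : Qmx n N = (\matrix_(i < n, t < n) (Rp n i).[(fun t => N%:R * (t.+1)%:R) t])
    *m diag_mx w.
  apply/matrixP => i t; rewrite mul_mx_diag !mxE (Q_factor n i _ (ltn_ord i)).
  have -> : (((t.+1 * N)%N)%:Z)%:~R = (t.+1 * N)%:R :> rat by [].
  by rewrite [N%:R * _]mulrC -natrM mulrC.
rewrite hQ det_mulmx det_diag (RV n (fun t => N%:R * (t.+1)%:R)).
rewrite (Vm_scale n N%:R (fun t => (t.+1)%:R)) !det_mulmx det_diag_pow.
have := det_Ry n; rewrite (RV n (fun t => (t.+1)%:R)) det_mulmx => hR.
rewrite mulrCA hR big_split /=.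
rewrite -mulrA; congr (_ * (_ * _)); by apply: eq_bigr => i _; rewrite mxE.

Qed.

Theorem mainTheorem11 (k N : nat) (hk : (2 <= k)%N) (hN : (2 <= N)%N) :
  \det (Htilde k N) =
    (N ^ 'C(k, 2))%:R / (k`!)%:R * \prod_(1 <= i < k) ((i * N + 1)%N%:R : rat).
Proof.
case: k hk => [|[|n]] // _.
rewrite det_H_Q; last by lia.
rewrite det_Q.
set m := n.+1.
have hF : (m.+1)`!%:R != 0 :> rat by rewrite pnatr_eq0 -lt0n fact_gt0.
have key : forall i : 'I_m,
  (Rp m i).[(i.+1)%:R] * ((i.+1 * N)%:R * ((i.+1 * N)%:R + 1) / (m.+1)`!%:R)
  = N%:R * ((i.+1 * N)%:R + 1) / (i.+2)%:R :> rat.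
  move=> i.
  have hd := Rp_diag m i (ltn_ord i).
  set D := (Rp m i).[(i.+1)%:R] in hd *.
  have h1 : (i.+1)%:R != 0 :> rat by rewrite pnatr_eq0.
  have h2 : (i.+2)%:R != 0 :> rat by rewrite pnatr_eq0.
  have -> : D = (m.+1)`!%:R / ((i.+1)%:R * (i.+2)%:R).
    rewrite -hd. field.
    have hi0 : (0:rat) <= i%:R := ler0n _ _.
    apply/andP; split; apply/eqP; lra.
  rewrite natrM.
  field.
  have hi0 : (0:rat) <= i%:R := ler0n _ _.
  rewrite hF /=; apply/andP; split; apply/eqP; lra.
rewrite (eq_bigr _ (fun i _ => key i)).
rewrite big_split big_split /= prodr_const card_ord prodfV.
have hfact : \prod_(i < m) (i.+2)%:R = (m.+1)`!%:R :> rat.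
  by rewrite fact_prod big_add1 /= big_nat_recl // mul1n big_mkord natr_prod.
have hpr : \prod_(1 <= i < m.+1) (i * N + 1)%:R = \prod_(i < m) ((i.+1 * N)%:R + 1) :> rat.
  by rewrite big_add1 /= big_mkord; apply: eq_bigr => i _; rewrite natrD.
rewrite hfact hpr natrX binS bin1 exprD.
field. exact: hF.
Qed.
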